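(* Let $R$ be a semiring and let $\theta$ be a $k$-congruence on $R$. Then $R/\theta$ has a zero $0_\theta$, $0_\theta$ is an ideal of $R$, and $\kappa_{0_\theta}=\theta$.
   Context: A semiring $(R,+,\cdot)$ is a set with two binary operations such that $(R,+)$ is a commutative semigroup, $(R,\cdot)$ is a semigroup, and multiplication distributes over addition from both sides; no additive neutral element or identity is assumed. An element $0$ of a semiring $S$ is a zero of $S$ if $0+s=s$ and $0s=s0=0$ for all $s\in S$. An ideal of $R$ is a nonempty subset $A\subseteq R$ with $a+b\in A$ and $ra,ar\in A$ for all $a,b\in A$, $r\in R$. A congruence on $R$ is an equivalence relation $\equiv$ such that $a\equiv b$ implies $a+c\equiv b+c$, $ac\equiv bc$, $ca\equiv cb$ for all $a,b,c\in R$; $R/\theta$ denotes the quotient semiring of $\theta$-classes with $[x]+[y]=[x+y]$, $[x][y]=[xy]$; a zero of $R/\theta$ is a $\theta$-class, hence a subset of $R$. For an ideal $A$ of $R$, $\kappa_A$ is the congruence defined by $x\,\kappa_A\,y$ iff $x+a=y+b$ for some $a,b\in A$. A congruence $\theta$ is a $k$-congruence if $\theta=\kappa_A$ for some ideal $A$ of $R$. Throughout, $|R|\geq 2$. *)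

(* Defs.v *)
(* a semiring without assumed zero or identity, given by an
   explicit carrier type and two binary operations. Subsets are predicates. *)

Set Implicit Arguments.

Section Semiring.
Variables (R : Type) (add mul : R -> R -> R).

Definition is_semiring : Prop :=
  (forall a b c, add a (add b c) = add (add a b) c) /\
  (forall a b, add a b = add b a) /\
  (forall a b c, mul a (mul b c) = mul (mul a b) c) /\
  (forall a b c, mul a (add b c) = add (mul a b) (mul a c)) /\
  (forall a b c, mul (add a b) c = add (mul a c) (mul b c)).

Definition is_ideal (A : R -> Prop) : Prop :=
  (exists a, A a) /\
  (forall a b, A a -> A b -> A (add a b)) /\
  (forall r a, A a -> A (mul r a) /\ A (mul a r)).

Definition is_congruence (th : R -> R -> Prop) : Prop :=
  (forall x, th x x) /\
  (forall x y, th x y -> th y x) /\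
  (forall x y z, th x y -> th y z -> th x z) /\
  (forall a b c, th a b -> th (add a c) (add b c) /\ th (mul a c) (mul b c)
                           /\ th (mul c a) (mul c b)).

Definition kappa (A : R -> Prop) (x y : R) : Prop :=
  exists a b, A a /\ A b /\ add x a = add y b.

Definition same_rel (r1 r2 : R -> R -> Prop) : Prop :=
  forall x y, r1 x y <-> r2 x y.

Definition is_k_congruence (th : R -> R -> Prop) : Prop :=
  is_congruence th /\ exists A, is_ideal A /\ same_rel th (kappa A).

Definition th_class (th : R -> R -> Prop) (x : R) : R -> Prop := fun y => th x y.

(* Z is a zero of the quotient semiring R/theta: Z is a theta-class [z] with
   [z]+[s] = [s] and [z][s] = [s][z] = [z] for every s. Classes are compared
   as subsets of R (extensionally). *)
Definition is_quot_zero (th : R -> R -> Prop) (Z : R -> Prop) : Prop :=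
  exists z, (forall y, Z y <-> th_class th z y) /\
    forall s, (forall y, th_class th (add z s) y <-> th_class th s y) /\
              (forall y, th_class th (mul z s) y <-> th_class th z y) /\
              (forall y, th_class th (mul s z) y <-> th_class th z y).

End Semiring.

(* Main.v *)
Require Import Defs.

Theorem lemma3p6 (R : Type) (add mul : R -> R -> R) (th : R -> R -> Prop) :
  is_semiring add mul ->
  (exists x y : R, x <> y) ->
  is_k_congruence add mul th ->
  (exists Z : R -> Prop, is_quot_zero add mul th Z) /\
  (forall Z : R -> Prop, is_quot_zero add mul th Z ->
     is_ideal add mul Z /\ same_rel (kappa add Z) th).
Proof.
  intros [Aa [Ac [Ma [Dl Dr]]]] _ [[Rf [Sy [Tr Cp]]] [A [[[a0 Ha0] [IA IM]] HA]]].
  unfold same_rel in HA.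
  assert (AA : forall a b, A a -> A b -> th a b).
  { intros a b Ha Hb. apply HA. exists b, a. repeat split; auto. }
  split.
  - exists (th_class th a0). exists a0. split; [tauto|].
    intros s. unfold th_class. split; [|split].
    + assert (T : th (add a0 s) s).
      { apply HA. exists a0, (add a0 a0). repeat split; auto.
        rewrite (Ac a0 s), <- Aa. reflexivity. }
      intros y; split; intros H; eauto.
    + assert (th (mul a0 s) a0) by (apply AA; auto; apply (IM s a0 Ha0)).
      intros y; split; intros H'; eauto.
    + assert (th (mul s a0) a0) by (apply AA; auto; apply (IM s a0 Ha0)).
      intros y; split; intros H'; eauto.
  - intros Z [z [HZ Hz]]. unfold th_class in *.
    assert (Zadd : forall s, th (add z s) s).
    { intros s. apply (proj1 (Hz s) s). apply Rf. }
    assert (Zml : forall s, th (mul s z) z).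
    { intros s. apply (proj2 (proj2 (Hz s)) z). apply Rf. }
    assert (Zmr : forall s, th (mul z s) z).
    { intros s. apply (proj1 (proj2 (Hz s)) z). apply Rf. }
    assert (za0 : th z a0).
    { apply Tr with (mul z a0). apply Sy, Zmr. apply AA; auto. apply (IM z a0 Ha0). }
    assert (AZ : forall a, A a -> Z a).
    { intros a Ha. apply HZ. apply Tr with a0; auto. }
    split; [split; [|split]|].
    + exists z. apply HZ, Rf.
    + intros a b Ha Hb. apply HZ in Ha. apply HZ in Hb. apply HZ.
      apply Tr with b; auto. apply Sy. apply Tr with (add z b).
      apply (Cp _ _ b). apply Sy; auto. apply Zadd.
    + intros r a Ha. apply HZ in Ha. split; apply HZ.
      * apply Tr with (mul r z). apply Sy, Zml. apply (Cp _ _ r Ha).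
      * apply Tr with (mul z r). apply Sy, Zmr. apply (Cp _ _ r Ha).
    + intros x y. split.
      * intros [a [b [Ha [Hb E]]]]. apply HZ in Ha. apply HZ in Hb.
        assert (K : forall u c, th z c -> th u (add u c)).
        { intros u c Hc. apply Tr with (add u z).
          rewrite Ac. apply Sy, Zadd. rewrite (Ac u z), (Ac u c). apply (Cp _ _ u Hc). }
        apply Tr with (add x a). apply K; auto. rewrite E. apply Sy, K; auto.
      * intros H. apply HA in H. destruct H as [a [b [Ha [Hb E]]]].
        exists a, b. repeat split; auto.
Qed.
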